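(* Let $U$ be an isometry of $\mathbb{C}^{N\times N}$ or of $\ell^2(\mathbb{N})$, $\mathbf{N}=(N_1,\dots,N_r)$, $\mathbf{M}=(M_1,\dots,M_r)$ with $1\le N_1<\dots<N_r$, $1\le M_1<\dots<M_r$, and $\mathbf{s}=(s_1,\dots,s_r)\in\mathbb{N}^r$. Then for $k,l=1,\dots,r$, $$\kappa_{\mathbf{N},\mathbf{M}}(k,l)\le\min\Big\{\mu_{\mathbf{N},\mathbf{M}}(k,l)\cdot s_l,\ \sqrt{s_l\,\mu(P^{N_{k-1}}_{N_k}U)}\cdot\|P^{N_{k-1}}_{N_k}UP^{M_{l-1}}_{M_l}\|\Big\},$$ and, in the case $U\in\mathcal{B}(\ell^2(\mathbb{N}))$, for $k=1,\dots,r$, $$\kappa_{\mathbf{N},\mathbf{M}}(k,\infty)\le\min\Big\{\mu_{\mathbf{N},\mathbf{M}}(k,\infty)\cdot s_r,\ \sqrt{s_r\,\mu(P^{N_{k-1}}_{N_k}U)}\cdot\|P^{N_{k-1}}_{N_k}UP^\perp_{M_{r-1}}\|\Big\}.$$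
   Context: $N_0=M_0=0$. $P^a_b$ projects onto $\mathrm{span}\{e_{a+1},\dots,e_b\}$, $P^\perp_K=I-P_K$ with $P_K$ the projection onto the first $K$ coordinates. $\mu(A)=\sup_{i,j}|a_{ij}|^2$. $\mu_{\mathbf{N},\mathbf{M}}(k,l)=\sqrt{\mu(P^{N_{k-1}}_{N_k}UP^{M_{l-1}}_{M_l})\mu(P^{N_{k-1}}_{N_k}U)}$, $\mu_{\mathbf{N},\mathbf{M}}(k,\infty)=\sqrt{\mu(P^{N_{k-1}}_{N_k}UP^\perp_{M_{r-1}})\mu(P^{N_{k-1}}_{N_k}U)}$. With $\Theta=\{\eta:\|\eta\|_{\ell^\infty}\le1,\ |\mathrm{supp}(P^{M_{l-1}}_{M_l}\eta)|=s_l\ (l=1,\dots,r-1),\ |\mathrm{supp}(P^\perp_{M_{r-1}}\eta)|=s_r\}$, define $\kappa_{\mathbf{N},\mathbf{M}}(k,l)=\max_{\eta\in\Theta}\|P^{N_{k-1}}_{N_k}UP^{M_{l-1}}_{M_l}\eta\|_{\ell^\infty}\sqrt{\mu(P^{N_{k-1}}_{N_k}U)}$ and $\kappa_{\mathbf{N},\mathbf{M}}(k,\infty)=\max_{\eta\in\Theta}\|P^{N_{k-1}}_{N_k}UP^\perp_{M_{r-1}}\eta\|_{\ell^\infty}\sqrt{\mu(P^{N_{k-1}}_{N_k}U)}$. *)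

(* Defs.v *)
From mathcomp Require Import all_boot all_order all_algebra.
From mathcomp Require Import all_classical all_reals.
From mathcomp Require Import topology normedtype sequences.
From mathcomp Require Export complex.

Set Implicit Arguments.
Unset Strict Implicit.
Unset Printing Implicit Defensive.

Import Order.TTheory GRing.Theory Num.Theory.
Import numFieldNormedType.Exports.
Local Open Scope ring_scope.
Local Open Scope classical_set_scope.

Section Defs.
Variable R : realType.

Definition cabs (z : R[i]) : R := Normc.normc z.

(* vectors are complex sequences indexed by nat (coordinate i <-> e_{i+1});
   operators act on such sequences *)
Definition vec := nat -> R[i].
Definition oper := vec -> vec.

Definition l2 (x : vec) : Prop := cvgn (series (fun i => cabs (x i) ^+ 2)).
Definition l2norm (x : vec) : R :=
  Num.sqrt (limn (series (fun i => cabs (x i) ^+ 2))).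

Definition l2_isometry (U : oper) : Prop :=
  (forall (a : R[i]) (x y : vec), l2 x -> l2 y ->
     U (fun i => a * x i + y i) = (fun i => a * U x i + U y i)) /\
  (forall x : vec, l2 x -> l2 (U x) /\ l2norm (U x) = l2norm x).

Definition mx_isometry (N : nat) (U : 'M[R[i]]_N) : Prop :=
  (map_mx conjc U)^T *m U = 1%:M.

(* the operator on C^N (vectors supported on coordinates 0..N-1) given by U *)
Definition mx_oper (N : nat) (U : 'M[R[i]]_N) : oper :=
  fun x i => if insub i : option 'I_N is Some i' then
               \sum_(j < N) U i' j * x j else 0.

(* P^a_b : projection onto span{e_{a+1},...,e_b}, i.e. coordinates a..b-1 *)
Definition Pab (a b : nat) (x : vec) : vec :=
  fun i => if (a <= i < b)%N then x i else 0.
(* P^perp_K = I - P_K : kills the first K coordinates *)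
Definition Pperp (K : nat) (x : vec) : vec :=
  fun i => if (K <= i)%N then x i else 0.

Definition ebasis (j : nat) : vec := fun i => (i == j)%:R.

Definition entry (A : oper) (i j : nat) : R[i] := A (ebasis j) i.
Definition mu (A : oper) : R :=
  sup [set cabs (entry A p.1 p.2) ^+ 2 | p in [set: nat * nat]].

Definition linf (x : vec) : R := sup [set cabs (x i) | i in [set: nat]].

Definition opnorm (A : oper) : R :=
  sup [set l2norm (A x) | x in [set x : vec | l2 x /\ l2norm x <= 1]].

Definition supp_card (A : pred nat) (x : vec) (s : nat) : Prop :=
  exists S : seq nat, [/\ uniq S, size S = s &
    forall j, (A j && (x j != 0)) = (j \in S)].

(* The set Theta; [dom] describes the ambient space (coordinates j with
   dom j; [fun j => j < N] for C^N, [predT] for l^2(N)).  The sequences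
   N = (N_k)_k, M = (M_k)_k are given as functions with N_0 = M_0 = 0. *)
Definition Theta (dom : pred nat) (M : nat -> nat) (s : nat -> nat) (r : nat)
  : set vec :=
  [set eta | [/\ (forall j, ~~ dom j -> eta j = 0),
     (forall j, cabs (eta j) <= 1),
     (forall l, (1 <= l <= r.-1)%N ->
        supp_card (fun j => (M l.-1 <= j < M l)%N) eta (s l)) &
     supp_card (fun j => (M r.-1 <= j)%N) eta (s r)]].

Definition muNM (U : oper) (N M : nat -> nat) (k l : nat) : R :=
  Num.sqrt (mu (fun x => Pab (N k.-1) (N k) (U (Pab (M l.-1) (M l) x)))
            * mu (fun x => Pab (N k.-1) (N k) (U x))).
Definition muNM_inf (U : oper) (N M : nat -> nat) (r k : nat) : R :=
  Num.sqrt (mu (fun x => Pab (N k.-1) (N k) (U (Pperp (M r.-1) x)))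
            * mu (fun x => Pab (N k.-1) (N k) (U x))).

(* kappa_{N,M}(k,l) and kappa_{N,M}(k,oo) (max over Theta, taken as a sup) *)
Definition kappaNM (dom : pred nat) (U : oper) (N M s : nat -> nat) (r k l : nat)
  : R :=
  sup [set linf (Pab (N k.-1) (N k) (U (Pab (M l.-1) (M l) eta)))
           * Num.sqrt (mu (fun x => Pab (N k.-1) (N k) (U x)))
      | eta in Theta dom M s r].
Definition kappaNM_inf (dom : pred nat) (U : oper) (N M s : nat -> nat)
  (r k : nat) : R :=
  sup [set linf (Pab (N k.-1) (N k) (U (Pperp (M r.-1) eta)))
           * Num.sqrt (mu (fun x => Pab (N k.-1) (N k) (U x)))
      | eta in Theta dom M s r].

End Defs.

(* Main.v *)
Require Import Defs.
From mathcomp Require Import all_boot all_order all_algebra.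
From mathcomp Require Import all_classical all_reals.
From mathcomp Require Import topology normedtype sequences complex.
From mathcomp Require Import ring zify.
Import Order.TTheory GRing.Theory Num.Theory.
Import numFieldNormedType.Exports.
Local Open Scope ring_scope.

Section Aux.
Set Implicit Arguments.
Unset Strict Implicit.
Variable R : realType.
Implicit Types (x y : vec R) (z : R[i]).
Local Notation sqrt := Num.sqrt.

Definition msk (P : pred nat) (x : vec R) : vec R :=
  fun i => if P i then x i else 0.
Definition fsuppB n (x : vec R) := forall i, (n <= i)%N -> x i = 0.

Lemma cabs_ge0 z : 0 <= cabs z.
Proof. by case: z => a b; rewrite /cabs /=; apply: sqrtr_ge0. Qed.
Lemma cabs0 : cabs (0 : R[i]) = 0.
Proof. exact: Normc.normc0. Qed.
Lemma cabs1 : cabs (1 : R[i]) = 1.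
Proof. exact: Normc.normc1. Qed.
Lemma cabsM z1 z2 : cabs (z1 * z2) = cabs z1 * cabs z2.
Proof. exact: Normc.normcM. Qed.
Lemma cabsD z1 z2 : cabs (z1 + z2) <= cabs z1 + cabs z2.
Proof. exact: le_normcD. Qed.
Lemma cabs_sum (I : Type) (r : seq I) (F : I -> R[i]) :
  cabs (\sum_(j <- r) F j) <= \sum_(j <- r) cabs (F j).
Proof.
elim: r => [|a r IH]; first by rewrite !big_nil cabs0.
rewrite !big_cons; apply: le_trans (cabsD _ _) _; exact: lerD.
Qed.
Lemma cabs_real (c : R) : cabs (c%:C)%C = `|c|.
Proof. by rewrite /cabs /= expr0n /= addr0 sqrtr_sqr. Qed.
Lemma cabs_bool (b : bool) : cabs (b%:R : R[i]) <= 1.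
Proof. by case: b; rewrite ?cabs1 ?cabs0. Qed.
Lemma sq_ge0' z : 0 <= cabs z ^+ 2.
Proof. exact: sqr_ge0. Qed.

Lemma l2_fsupp n x : fsuppB n x ->
  l2 x /\ limn (series (fun i => cabs (x i) ^+ 2)) = \sum_(i < n) cabs (x i) ^+ 2.
Proof.
move=> hx.
have H : forall m, (n <= m)%N -> series (fun i => cabs (x i) ^+ 2) m =
   \sum_(i < n) cabs (x i) ^+ 2.
  move=> m nm; rewrite /series /= (@big_cat_nat _ _ _ n 0 m _ _ (leq0n n) nm) /=.
  rewrite [X in _ + X]big1_seq ?addr0 ?big_mkord // => i /andP[_].
  by rewrite mem_index_iota => /andP[/hx -> _]; rewrite cabs0 expr0n.
have hc : (series (fun i => cabs (x i) ^+ 2) @ \oo --> \sum_(i < n) cabs (x i) ^+ 2)%classic.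
  by apply: cvg_near_cst; exists n => // m /= nm; apply: H.
split; first by apply/cvg_ex; eexists; exact: hc.
exact: cvg_lim.
Qed.

Lemma l2norm_fsupp n x : fsuppB n x ->
  l2norm x = sqrt (\sum_(i < n) cabs (x i) ^+ 2).
Proof. by move=> /l2_fsupp[_ h]; rewrite /l2norm h. Qed.

Lemma series_ndecr x : nondecreasing_seq (series (fun i => cabs (x i) ^+ 2)).
Proof. by apply: (@nondecreasing_series _ _ xpredT 0) => n _ _; apply: sqr_ge0. Qed.

Lemma lim_ge0 x : l2 x -> 0 <= limn (series (fun i => cabs (x i) ^+ 2)).
Proof.
move=> hx; apply: le_trans (nondecreasing_cvgn_le (series_ndecr x) hx 0).
by rewrite /series /= big_geq.
Qed.

Lemma coord_le_l2norm x i : l2 x -> cabs (x i) <= l2norm x.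
Proof.
move=> hx.
have h1 : cabs (x i) ^+ 2 <= limn (series (fun i => cabs (x i) ^+ 2)).
  apply: le_trans (nondecreasing_cvgn_le (series_ndecr x) hx i.+1).
  rewrite /series /= big_nat_recr //=; apply: ler_wpDl => //.
  by apply: sumr_ge0 => j _; apply: sqr_ge0.
rewrite /l2norm -[cabs (x i)]ger0_norm ?cabs_ge0 // -sqrtr_sqr.
by rewrite ler_sqrt // (le_trans _ h1) // sqr_ge0.
Qed.

Lemma msk_l2 P x : l2 x -> l2 (msk P x) /\ l2norm (msk P x) <= l2norm x.
Proof.
move=> hx.
have le : forall i, cabs (msk P x i) ^+ 2 <= cabs (x i) ^+ 2.
  by move=> i; rewrite /msk; case: (P i); rewrite ?cabs0 ?expr0n ?sqr_ge0.
have hm : l2 (msk P x).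
  by apply: (series_le_cvg _ _ le hx) => i; apply: sqr_ge0.
split => //; rewrite /l2norm ler_sqrt ?lim_ge0 //.
apply: ler_lim => //; apply: nearW => n; apply: ler_sum => i _; exact: le.
Qed.

Lemma l2norm_scale c n y : fsuppB n y ->
  l2norm (fun i => c * y i) = cabs c * l2norm y.
Proof.
move=> hy.
have hcy : fsuppB n (fun i => c * y i) by move=> i /hy ->; rewrite mulr0.
rewrite (l2norm_fsupp hcy) (l2norm_fsupp hy).
under eq_bigr do rewrite cabsM exprMn.
rewrite -mulr_sumr sqrtrM ?sqr_ge0 // sqrtr_sqr ger0_norm ?cabs_ge0 //.
Qed.


Definition fsupp x := exists n, fsuppB n x.
Definition ULin (U : oper R) := forall a x y, fsupp x -> fsupp y ->
  U (fun i => a * x i + y i) = (fun i => a * U x i + U y i).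
Definition lincomb (S : seq nat) (d : nat -> R[i]) : vec R :=
  fun i => \sum_(j <- S) d j * ebasis R j i.

Lemma fsupp_lin a x y : fsupp x -> fsupp y -> fsupp (fun i => a * x i + y i).
Proof.
move=> [n hn] [m hm]; exists (maxn n m) => i.
by rewrite geq_max => /andP[/hn -> /hm ->]; rewrite mulr0 addr0.
Qed.
Lemma fsupp0 : fsupp (fun _ => 0).
Proof. by exists 0%N. Qed.
Lemma fsupp_e j : fsupp (ebasis R j).
Proof. by exists j.+1 => i ji; rewrite /ebasis (gtn_eqF ji). Qed.

Lemma lincomb_cons a S d :
  lincomb (a :: S) d = fun i => d a * ebasis R a i + lincomb S d i.
Proof. by apply: funext => i; rewrite /lincomb big_cons. Qed.

Lemma fsupp_lincomb S d : fsupp (lincomb S d).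
Proof.
elim: S => [|a S IH]; first by exists 0%N => i _; rewrite /lincomb big_nil.
by rewrite lincomb_cons; apply: fsupp_lin => //; apply: fsupp_e.
Qed.

Lemma U0 U : ULin U -> U (fun _ => 0) = fun _ => 0.
Proof.
move=> HU; have := HU 1 (fun _ => 0) (fun _ => 0) fsupp0 fsupp0.
have -> : (fun i : nat => 1 * (fun _ : nat => (0 : R[i])) i + (fun _ : nat => 0) i)
  = (fun _ => 0) by apply: funext => i; rewrite mul1r addr0.
move=> h; apply: funext => i; move/(congr1 (fun f => f i)): h => /= /eqP.
rewrite mul1r -{1}[U _ i]addr0 (inj_eq (addrI _)) => /eqP <-//.
Qed.

Lemma U_lincomb U S d : ULin U ->
  U (lincomb S d) = fun i => \sum_(j <- S) d j * U (ebasis R j) i.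
Proof.
move=> HU; elim: S => [|a S IH].
  have -> : lincomb [::] d = fun _ => 0 by apply: funext => i; rewrite /lincomb big_nil.
  by rewrite U0 //; apply: funext => i; rewrite big_nil.
rewrite lincomb_cons (HU (d a) (ebasis R a) (lincomb S d)) ?IH.
- by apply: funext => i; rewrite big_cons.
- exact: fsupp_e.
- exact: fsupp_lincomb.
Qed.

Lemma lincomb_at S d i : uniq S -> lincomb S d i = if i \in S then d i else 0.
Proof.
elim: S => [|a S IH] /=; first by rewrite /lincomb big_nil.
move=> /andP[aS uS]; rewrite lincomb_cons /= IH // in_cons /ebasis.
case: (eqVneq i a) => [->|ne] /=; first by rewrite (negbTE aS) mulr1 addr0.
by rewrite mulr0 add0r.
Qed.

Definition Bop (U : oper R) (P J : pred nat) : oper R :=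
  fun x => msk P (U (msk J x)).

Lemma msk_e J j : msk J (ebasis R j) = if J j then ebasis R j else (fun _ => 0).
Proof.
apply: funext => i; rewrite /msk.
case: (eqVneq i j) => [->|ne]; first by case: (J j) => //=.
by rewrite /ebasis (negbTE ne); case: (J i); case: (J j) => //=; rewrite (negbTE ne).
Qed.

Lemma entryB (U : oper R) (P J : pred nat) i j : ULin U ->
  entry (Bop U P J) i j = if J j && P i then U (ebasis R j) i else 0.
Proof.
move=> HU; rewrite /entry /Bop msk_e /msk.
by case: (J j) => /=; [|rewrite U0 //]; case: (P i).
Qed.

Lemma B_lincomb (U : oper R) (P J : pred nat) (S : seq nat) (d : nat -> R[i]) : ULin U -> (forall j, j \in S -> J j) ->
  Bop U P J (lincomb S d) = fun i => \sum_(j <- S) d j * entry (Bop U P J) i j.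
Proof.
move=> HU HS; rewrite {1}/Bop.
have -> : msk J (lincomb S d) = lincomb S d.
  apply: funext => i; rewrite /msk; case Ji: (J i) => //; symmetry.
  apply: big1_seq => j /andP[_ jS]; rewrite /ebasis.
  case: (eqVneq i j) => [eij|_]; last by rewrite mulr0.
  by move: (HS _ jS); rewrite -eij Ji.
rewrite U_lincomb //; apply: funext => i; rewrite /msk.
under [RHS]eq_big_seq => j jS do rewrite entryB // HS //=.
by case: (P i) => //; rewrite big1 // => j _; rewrite mulr0.
Qed.

Lemma B_eta (U : oper R) (P J : pred nat) (S : seq nat) (eta : vec R) : ULin U -> uniq S ->
  (forall j, (J j && (eta j != 0)) = (j \in S)) ->
  Bop U P J eta = fun i => \sum_(j <- S) eta j * entry (Bop U P J) i j.
Proof.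
move=> HU uS HS.
have HS' : forall j, j \in S -> J j by move=> j; rewrite -HS => /andP[].
have E : msk J eta = lincomb S eta.
  apply: funext => i; rewrite lincomb_at // /msk -HS.
  by case: (J i) => //=; case: (eqVneq (eta i) 0).
rewrite -B_lincomb // /Bop -E.
congr (msk P (U _)); apply: funext => i; rewrite /msk.
by case: (J i).
Qed.


Lemma sup_ge0' (E : set R) : (exists e, E e) -> (forall e, E e -> 0 <= e) -> 0 <= sup E.
Proof.
move=> [e Ee] H; case: (pselect (has_ubound E)) => h.
  exact: le_trans (H e Ee) (ub_le_sup h Ee).
by rewrite sup_out // => -[].
Qed.

Lemma mu_ge0 (A : oper R) : 0 <= mu A.
Proof.
apply: sup_ge0'; first by exists (cabs (entry A 0%N 0%N) ^+ 2); exists (0%N, 0%N).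
by move=> _ [p _ <-]; apply: sqr_ge0.
Qed.

Lemma le_sqrt_sq (a b : R) : 0 <= a -> a ^+ 2 <= b -> a <= sqrt b.
Proof.
move=> a0 h; rewrite -[a]ger0_norm // -sqrtr_sqr ler_sqrt //.
exact: le_trans (sqr_ge0 _) h.
Qed.

Lemma entry_le_mu (A : oper R) i j :
  has_ubound [set cabs (entry A p.1 p.2) ^+ 2 | p in [set: nat * nat]] ->
  cabs (entry A i j) <= sqrt (mu A).
Proof.
move=> h; apply: le_sqrt_sq; first exact: cabs_ge0.
by apply: (ub_le_sup h); exists (i, j).
Qed.

Lemma sum_const_seq (S : seq nat) (c : R) : \sum_(j <- S) c = (size S)%:R * c.
Proof.
elim: S => [|a S IH]; first by rewrite big_nil mul0r.
by rewrite big_cons IH /= mulrSr mulrDl mul1r addrC.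
Qed.

Lemma sum_mem_count (S : seq nat) n :
  \sum_(i < n) (((i : nat) \in S)%:R : R) = (count (mem S) (iota 0 n))%:R.
Proof.
rewrite -(big_mkord xpredT (fun i => ((i \in S)%:R : R))) /index_iota subn0.
elim: (iota 0 n) => [|a l IH]; first by rewrite big_nil.
by rewrite big_cons IH /= natrD.
Qed.

Lemma count_le (S : seq nat) n : uniq S -> (count (mem S) (iota 0 n) <= size S)%N.
Proof.
move=> uS; rewrite -size_filter; apply: uniq_leq_size.
  exact: filter_uniq (iota_uniq _ _).
by move=> i; rewrite mem_filter => /andP[].
Qed.

Lemma linf_le (y : vec R) b : (forall i, cabs (y i) <= b) -> linf y <= b.
Proof.
move=> h; apply: ge_sup; first by exists (cabs (y 0%N)); exists 0%N.
by move=> _ [i _ <-].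
Qed.

Lemma main_bound (U : oper R) (P J : pred nat) nP (s : nat) (eta : vec R)
    (S : seq nat) :
  ULin U ->
  (forall i, (nP <= i)%N -> ~~ P i) ->
  (exists K, forall j i, cabs (U (ebasis R j) i) <= K) ->
  (exists K, forall x, l2 x -> l2norm x <= 1 -> l2norm (Bop U P J x) <= K) ->
  uniq S -> (size S <= s)%N -> (forall j, (J j && (eta j != 0)) = (j \in S)) ->
  (forall j, cabs (eta j) <= 1) ->
  linf (Bop U P J eta) * sqrt (mu (fun x => msk P (U x))) <=
  Num.min (sqrt (mu (Bop U P J) * mu (fun x => msk P (U x))) * s%:R)
          (sqrt (s%:R * mu (fun x => msk P (U x))) * opnorm (Bop U P J)).
Proof.
move=> HU HP [K HK] [K2 HK2] uS sS HS Heta.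
set B := Bop U P J; set C := fun x => msk P (U x).
have hB := B_eta P HU uS HS; rewrite -/B in hB.
have HS' : forall j, j \in S -> J j by move=> j; rewrite -HS => /andP[].
have K0 : 0 <= K by exact: le_trans (cabs_ge0 _) (HK 0%N 0%N).
have mubnd : has_ubound [set cabs (entry B p.1 p.2) ^+ 2 | p in [set: nat * nat]].
  exists (K ^+ 2) => _ [[i j] _ <-] /=.
  rewrite expr2 expr2; apply: ler_pM; rewrite ?cabs_ge0 //;
  by rewrite /B entryB //; case: (_ && _); rewrite ?cabs0.
have ent : forall i j, cabs (entry B i j) <= sqrt (mu B).
  by move=> i j; apply: entry_le_mu.
have sq0 : 0 <= sqrt (mu B) by apply: sqrtr_ge0.
have pt : forall i, cabs (B eta i) <= (size S)%:R * sqrt (mu B).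
  move=> i; rewrite hB /= -sum_const_seq; apply: le_trans (cabs_sum _ _) _.
  apply: ler_sum => j _; rewrite cabsM -[X in _ <= X]mul1r.
  by apply: ler_pM; rewrite ?cabs_ge0.
have linf1 : linf (B eta) <= s%:R * sqrt (mu B).
  apply: linf_le => i; apply: le_trans (pt i) _.
  by apply: ler_wpM2r => //; rewrite ler_nat.
have sC0 : 0 <= sqrt (mu C) by apply: sqrtr_ge0.
rewrite le_min; apply/andP; split.
  apply: le_trans (ler_wpM2r sC0 linf1) _.
  by rewrite sqrtrM ?mu_ge0 // le_eqVlt; apply/orP; left; apply/eqP; ring.
suff h2 : linf (B eta) <= sqrt (s%:R : R) * opnorm B.
  apply: le_trans (ler_wpM2r sC0 h2) _.
  by rewrite sqrtrM ?ler0n // le_eqVlt; apply/orP; left; apply/eqP; ring.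
case: (posnP s) => [s0|spos].
  rewrite s0 sqrtr0 mul0r; apply: le_trans linf1 _; by rewrite s0 mul0r.
have sqs : 0 < sqrt (s%:R : R) by rewrite sqrtr_gt0 ltr0n.
set c := (sqrt (s%:R : R))^-1.
have c0 : 0 <= c by rewrite invr_ge0 ltW.
set d := fun j => (c%:C)%C * eta j.
set x := lincomb S d.
have hx : B x = fun i => (c%:C)%C * B eta i.
  rewrite /x /B B_lincomb // -/B hB; apply: funext => i /=; rewrite mulr_sumr.
  by apply: eq_bigr => j _; rewrite /d mulrA.
have fB : fsuppB nP (B eta).
  by move=> i /HP hi; rewrite /B /Bop /msk (negbTE hi).
have [nx hnx] := fsupp_lincomb S d.
have l2x : l2 x := (l2_fsupp hnx).1.
have nx1 : l2norm x <= 1.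
  rewrite (l2norm_fsupp hnx) -sqrtr1 ler_sqrt ?ler01 //.
  apply: (@le_trans _ _ (\sum_(i < nx) (((i:nat) \in S)%:R : R) * c ^+ 2)).
    apply: ler_sum => i _; rewrite /x lincomb_at //; case: ifP => iS.
      rewrite mul1r /d cabsM cabs_real ger0_norm // exprMn.
      apply: ler_piMr; first exact: sqr_ge0.
      by rewrite expr2; apply: mulr_ile1; rewrite ?cabs_ge0.
    by rewrite cabs0 mul0r expr2 mulr0.
  rewrite -mulr_suml sum_mem_count exprVn sqr_sqrtr ?ler0n //.
  rewrite ler_pdivrMr ?ltr0n // mul1r ler_nat.
  exact: leq_trans (count_le _ uS) sS.
have opx : l2norm (B x) <= opnorm B.
  apply: (ub_le_sup); last by exists x.
  by exists K2 => _ [y [l2y ny] <-]; apply: HK2.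
have eqn : l2norm (B eta) = sqrt (s%:R : R) * l2norm (B x).
  rewrite hx (l2norm_scale _ fB) cabs_real ger0_norm // mulrA mulfV ?mul1r //.
  by rewrite gt_eqF.
have l2B : l2 (B eta) := (l2_fsupp fB).1.
apply: (@le_trans _ _ (l2norm (B eta))).
  by apply: linf_le => i; exact: coord_le_l2norm.
by rewrite eqn; apply: ler_wpM2l => //; exact: sqrtr_ge0.
Qed.


Lemma kappa_le (F : vec R -> R) (T : set (vec R)) b :
  0 <= b -> (forall eta, T eta -> F eta <= b) -> sup ([set F eta | eta in T])%classic <= b.
Proof.
move=> b0 H; case: (pselect (exists e, T e)) => [[e Te]|ne].
  apply: ge_sup; first by exists (F e); exists e.
  by move=> _ [eta Teta <-]; apply: H.
have -> : ([set F eta | eta in T])%classic = set0.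
  by apply/seteqP; split => // y [e Te _]; exfalso; apply: ne; exists e.
by rewrite sup0.
Qed.

Lemma l2norm0 : l2norm (fun _ : nat => (0 : R[i])) = 0.
Proof.
have h : fsuppB 0 (fun _ : nat => (0 : R[i])) by [].
by rewrite (l2norm_fsupp h) big_ord0 sqrtr0.
Qed.

Lemma opnorm_ge0 (A : oper R) : 0 <= opnorm A.
Proof.
apply: sup_ge0'.
  exists (l2norm (A (fun _ => 0))); exists (fun _ => 0) => //; split.
    by have h : fsuppB 0 (fun _ : nat => (0 : R[i])) by []; case: (l2_fsupp h).
  by rewrite l2norm0 ler01.
by move=> _ [x _ <-]; apply: sqrtr_ge0.
Qed.

Lemma block_bound (U : oper R) (dom : pred nat) (Ns Ms s : nat -> nat) r k l :
  ULin U -> (exists K, forall j i, cabs (U (ebasis R j) i) <= K) ->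
  (forall P J, exists K, forall x, l2 x -> l2norm x <= 1 -> l2norm (Bop U P J x) <= K) ->
  (1 <= l <= r)%N ->
  kappaNM dom U Ns Ms s r k l <=
  Num.min (muNM U Ns Ms k l * (s l)%:R)
          (sqrt ((s l)%:R * mu (fun x => Pab (Ns k.-1) (Ns k) (U x)))
           * opnorm (fun x => Pab (Ns k.-1) (Ns k) (U (Pab (Ms l.-1) (Ms l) x)))).
Proof.
move=> HU HK HK2 /andP[l1 lr].
apply: kappa_le.
  by rewrite le_min; apply/andP; split; apply: mulr_ge0;
    rewrite ?sqrtr_ge0 ?ler0n ?opnorm_ge0.
move=> eta [_ Hbd Hbl Hla].
have HP : forall i, (Ns k <= i)%N -> ~~ (Ns k.-1 <= i < Ns k)%N.
  by move=> i h; rewrite negb_and -leqNgt h orbT.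
case: (ltnP l r) => lr'.
  have [S [uS sz HS]] : supp_card (fun j => (Ms l.-1 <= j < Ms l)%N) eta (s l).
    by apply: Hbl; apply/andP; split => //; lia.
  exact: (@main_bound U (fun i => (Ns k.-1 <= i < Ns k)%N)
    (fun j => (Ms l.-1 <= j < Ms l)%N) (Ns k) (s l) eta S HU HP HK (HK2 _ _)
    uS (eq_leq sz) HS Hbd).
have lr2 : l = r by apply/eqP; rewrite eqn_leq lr lr'.
subst l.
have [S [uS sz HS]] := Hla.
have HS2 : forall j, ((Ms r.-1 <= j < Ms r)%N && (eta j != 0)) =
   (j \in [seq j <- S | (Ms r.-1 <= j < Ms r)%N]).
  move=> j; rewrite mem_filter -HS.
  by case/boolP: (Ms r.-1 <= j < Ms r)%N => // /andP[-> _].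
have sz2 : (size ([seq j <- S | (Ms r.-1 <= j < Ms r)%N]) <= s r)%N.
  by rewrite size_filter -sz count_size.
exact: (@main_bound U (fun i => (Ns k.-1 <= i < Ns k)%N)
    (fun j => (Ms r.-1 <= j < Ms r)%N) (Ns k) (s r) eta _ HU HP HK (HK2 _ _)
    (filter_uniq _ uS) sz2 HS2 Hbd).
Qed.

Lemma block_bound_inf (U : oper R) (dom : pred nat) (Ns Ms s : nat -> nat) r k :
  ULin U -> (exists K, forall j i, cabs (U (ebasis R j) i) <= K) ->
  (forall P J, exists K, forall x, l2 x -> l2norm x <= 1 -> l2norm (Bop U P J x) <= K) ->
  kappaNM_inf dom U Ns Ms s r k <=
  Num.min (muNM_inf U Ns Ms r k * (s r)%:R)
          (sqrt ((s r)%:R * mu (fun x => Pab (Ns k.-1) (Ns k) (U x)))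
           * opnorm (fun x => Pab (Ns k.-1) (Ns k) (U (Pperp (Ms r.-1) x)))).
Proof.
move=> HU HK HK2.
apply: kappa_le.
  by rewrite le_min; apply/andP; split; apply: mulr_ge0;
    rewrite ?sqrtr_ge0 ?ler0n ?opnorm_ge0.
move=> eta [_ Hbd Hbl Hla].
have HP : forall i, (Ns k <= i)%N -> ~~ (Ns k.-1 <= i < Ns k)%N.
  by move=> i h; rewrite negb_and -leqNgt h orbT.
have [S [uS sz HS]] := Hla.
exact: (@main_bound U (fun i => (Ns k.-1 <= i < Ns k)%N)
    (fun j => (Ms r.-1 <= j)%N) (Ns k) (s r) eta S HU HP HK (HK2 _ _)
    uS (eq_leq sz) HS Hbd).
Qed.

Lemma l2norm_e j : l2norm (ebasis R j) = 1.
Proof.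
have h : fsuppB j.+1 (ebasis R j) by move=> i ji; rewrite /ebasis (gtn_eqF ji).
rewrite (l2norm_fsupp h) big_ord_recr /= big1 ?add0r.
  by rewrite /ebasis eqxx cabs1 expr1n sqrtr1.
by move=> i _; rewrite /ebasis (ltn_eqF (ltn_ord i)) cabs0 expr0n.
Qed.

Lemma l2iso_facts (U : oper R) : l2_isometry U ->
  [/\ ULin U, (exists K, forall j i, cabs (U (ebasis R j) i) <= K) &
  (forall P J, exists K, forall x, l2 x -> l2norm x <= 1 -> l2norm (Bop U P J x) <= K)].
Proof.
move=> [Hlin Hiso]; split.
- move=> a x y [n hn] [m hm]; apply: Hlin.
    exact: (l2_fsupp hn).1.
  exact: (l2_fsupp hm).1.
- exists 1 => j i.
  have [n hn] := fsupp_e j.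
  have [l2U nU] := Hiso _ (l2_fsupp hn).1.
  by apply: le_trans (coord_le_l2norm i l2U) _; rewrite nU l2norm_e.
- move=> P J; exists 1 => x l2x nx.
  have [l2m nm] := msk_l2 J l2x.
  have [l2U nU] := Hiso _ l2m.
  have [_ nP] := msk_l2 P l2U.
  by rewrite /Bop; apply: le_trans nP _; rewrite nU; apply: le_trans nm nx.
Qed.

Lemma mx_facts N (U : 'M[R[i]]_N) :
  [/\ ULin (mx_oper U), (exists K, forall j i, cabs (mx_oper U (ebasis R j) i) <= K) &
  (forall P J, exists K, forall x, l2 x -> l2norm x <= 1 ->
      l2norm (Bop (mx_oper U) P J x) <= K)].
Proof.
set K := \sum_(i0 < N) \sum_(k < N) cabs (U i0 k).
have K0 : 0 <= K by apply: sumr_ge0 => i _; apply: sumr_ge0 => j _; apply: cabs_ge0.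
have Hrow : forall x, (forall k, cabs (x k) <= 1) -> forall i, cabs (mx_oper U x i) <= K.
  move=> x hx i; rewrite /mx_oper; case: insub => [i'|]; last by rewrite cabs0.
  apply: le_trans (cabs_sum _ _) _.
  apply: (@le_trans _ _ (\sum_(k < N) cabs (U i' k))).
    by apply: ler_sum => j _; rewrite cabsM; apply: ler_piMr; rewrite ?cabs_ge0.
  rewrite /K [X in _ <= X](bigD1 i') //=; apply: ler_wpDr => //.
  by apply: sumr_ge0 => i0 _; apply: sumr_ge0 => j _; apply: cabs_ge0.
split.
- move=> a x y _ _; apply: funext => i; rewrite /mx_oper.
  case: insub => [i'|]; last by rewrite mulr0 addr0.
  rewrite mulr_sumr -big_split; apply: eq_bigr => j _ /=; ring.
- exists K => j i; apply: Hrow => k; exact: cabs_bool.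
- move=> P J; exists (sqrt (\sum_(i < N) K ^+ 2)) => x l2x nx.
  have hy : forall k, cabs (msk J x k) <= 1.
    move=> k; rewrite /msk; case: (J k); last by rewrite cabs0 ler01.
    exact: le_trans (coord_le_l2norm k l2x) nx.
  have hf : fsuppB N (Bop (mx_oper U) P J x).
    move=> i Ni; rewrite /Bop /msk /mx_oper insubN ?if_same //.
    by rewrite -leqNgt.
  rewrite (l2norm_fsupp hf) ler_sqrt; last by apply: sumr_ge0 => i _; apply: sqr_ge0.
  apply: ler_sum => i _; rewrite !expr2; apply: ler_pM; rewrite ?cabs_ge0 //;
  rewrite /Bop /msk; case: (P i); rewrite ?cabs0 // Hrow //.
Qed.

End Aux.

Theorem lemma7p5 (R : realType) (r : nat) (Ns Ms s : nat -> nat) :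
  (0 < r)%N -> Ns 0%N = 0%N -> Ms 0%N = 0%N ->
  (forall k, (k < r)%N -> (Ns k < Ns k.+1)%N) ->
  (forall k, (k < r)%N -> (Ms k < Ms k.+1)%N) ->
  (* U an isometry of C^{N x N} *)
  (forall (N : nat) (U : 'M[R[i]]_N), mx_isometry U ->
     (Ns r <= N)%N -> (Ms r <= N)%N ->
     forall k l, (1 <= k <= r)%N -> (1 <= l <= r)%N ->
       kappaNM (fun j => (j < N)%N) (mx_oper U) Ns Ms s r k l <=
       Num.min (muNM (mx_oper U) Ns Ms k l * (s l)%:R)
               (Num.sqrt ((s l)%:R * mu (fun x => Pab (Ns k.-1) (Ns k) (mx_oper U x)))
                * opnorm (fun x => Pab (Ns k.-1) (Ns k)
                                     (mx_oper U (Pab (Ms l.-1) (Ms l) x))))) /\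
  (* U an isometry of l^2(N) *)
  (forall U : oper R, l2_isometry U ->
     (forall k l, (1 <= k <= r)%N -> (1 <= l <= r)%N ->
       kappaNM predT U Ns Ms s r k l <=
       Num.min (muNM U Ns Ms k l * (s l)%:R)
               (Num.sqrt ((s l)%:R * mu (fun x => Pab (Ns k.-1) (Ns k) (U x)))
                * opnorm (fun x => Pab (Ns k.-1) (Ns k) (U (Pab (Ms l.-1) (Ms l) x))))) /\
     (forall k, (1 <= k <= r)%N ->
       kappaNM_inf predT U Ns Ms s r k <=
       Num.min (muNM_inf U Ns Ms r k * (s r)%:R)
               (Num.sqrt ((s r)%:R * mu (fun x => Pab (Ns k.-1) (Ns k) (U x)))
                * opnorm (fun x => Pab (Ns k.-1) (Ns k) (U (Pperp (Ms r.-1) x)))))).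
Proof.
move=> _ _ _ _ _; split.
  move=> N U _ _ _ k l _ hl.
  have [HU HK HK2] := mx_facts U.
  exact: block_bound.
move=> U hU; have [HU HK HK2] := l2iso_facts hU; split.
  move=> k l _ hl; exact: block_bound.
move=> k _; exact: block_bound_inf.
Qed.
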